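(* Let $G$ be a 2-connected subcubic graph and $e=uv\in E(G)$ such that $G-e$ is simple and 2-connected, and let $G_u$ be the graph obtained from $G-e$ by deleting $u$ and adding a new edge $f_u$ joining the two neighbours of $u$ other than $v$. Then $\widehat\delta(G,e)=\min\{\delta(G_u,f_u)+2,\ \widehat\delta(G_u,f_u)+1\}$.
   Context: Graphs may have loops and parallel edges unless called simple; a graph is subcubic if every vertex has degree at most 3. $n(G)$ is the number of vertices of $G$ and $n_2(G)$ the number of vertices of degree 2. A cycle is a connected 2-regular subgraph (a pair of parallel edges forms a cycle). An even cover of $G$ is a spanning subgraph $F$ in which every vertex has degree 0 or 2; its excess is $\mathrm{exc}(F)=2c(F)+i(F)$, where $c(F)$ is the number of cycles and $i(F)$ the number of isolated vertices of $F$. For $e\in E(G)$, let $\mathcal E(G,e)$ (resp. $\widehat{\mathcal E}(G,e)$) be the set of even covers of $G$ containing (resp. not containing) $e$, and define $\mathrm{exc}(G,e)=\min_{F\in\mathcal E(G,e)}\mathrm{exc}(F)-2$, $\widehat{\mathrm{exc}}(G,e)=\min_{F\in\widehat{\mathcal E}(G,e)}\mathrm{exc}(F)$, $\delta(G,e)=\mathrm{exc}(G,e)-\frac{n(G)+n_2(G)}4$, $\widehat\delta(G,e)=\widehat{\mathrm{exc}}(G,e)-\frac{n(G)+n_2(G)}4$. *)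

(* Defs.v *)
From mathcomp Require Import all_boot all_order all_algebra.
Set Implicit Arguments. Unset Strict Implicit. Unset Printing Implicit Defensive.
Import Order.TTheory GRing.Theory Num.Theory.

(* A finite multigraph: finite vertex type, finite edge type, and for every
   edge its (unordered) pair of ends, given as an ordered pair.  A loop is an
   edge whose two ends coincide. *)
Record mgraph := MGraph {
  vert : finType;
  edge : finType;
  ends : edge -> vert * vert }.

Section Basic.
Variable G : mgraph.

(* number of ends of edge f at x (a loop contributes 2) *)
Definition inc (x : vert G) (f : edge G) : nat :=
  ((ends f).1 == x) + ((ends f).2 == x).

(* degree of x in the spanning subgraph with edge set D *)
Definition deg_in (D : {set edge G}) (x : vert G) : nat := \sum_(f in D) inc x f.
Definition deg (x : vert G) : nat := deg_in setT x.

Definition subcubic : Prop := forall x, deg x <= 3.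

Definition adj_in (D : {set edge G}) : rel (vert G) :=
  fun x y => [exists f in D, (ends f == (x, y)) || (ends f == (y, x))].
Definition adj : rel (vert G) := adj_in setT.

Definition connected_on (D : {set edge G}) (S : {set vert G}) : Prop :=
  forall x y, x \in S -> y \in S ->
    connect (fun a b => [&& a \in S, b \in S & adj_in D a b]) x y.

Definition two_connected_in (D : {set edge G}) : Prop :=
  [/\ 2 < #|vert G|, connected_on D setT & forall z, connected_on D (setT :\ z)].
Definition two_connected : Prop := two_connected_in setT.

Definition simple_in (D : {set edge G}) : Prop :=
  (forall f, f \in D -> (ends f).1 != (ends f).2) /\
  (forall f g, f \in D -> g \in D -> f != g ->
     ends f != ends g /\ ends f != ((ends g).2, (ends g).1)).

Definition nG : nat := #|vert G|.
Definition n2G : nat := #|[set x | deg x == 2]|.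

Definition even_cover (F : {set edge G}) : bool :=
  [forall x, (deg_in F x == 0) || (deg_in F x == 2)].
(* cycles of an even cover F = connected components of (V, F) containing an edge *)
Definition ncycles (F : {set edge G}) : nat :=
  n_comp (adj_in F) [pred x | deg_in F x != 0].
Definition nisolated (F : {set edge G}) : nat := #|[set x | deg_in F x == 0]|.
Definition exc (F : {set edge G}) : nat := 2 * ncycles F + nisolated F.

(* minimum of a finite list of naturals; None (= +oo) for the empty list *)
Definition min_opt (s : seq nat) : option nat :=
  foldr (fun x acc => Some (if acc is Some y then minn x y else x)) None s.

Definition min_exc (P : pred {set edge G}) : option nat :=
  min_opt [seq exc F | F <- enum [pred F : {set edge G} | even_cover F && P F]].

Local Open Scope ring_scope.

(* extended rationals: None stands for +oo *)
Definition quarter_n : rat := ((nG + n2G)%:R / 4%:R).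

Definition exc_e (e : edge G) : option rat :=
  omap (fun m : nat => m%:R - 2%:R) (min_exc (fun F => e \in F)).
Definition exchat_e (e : edge G) : option rat :=
  omap (fun m : nat => m%:R) (min_exc (fun F => e \notin F)).
Definition delta (e : edge G) : option rat := omap (fun x => x - quarter_n) (exc_e e).
Definition deltahat (e : edge G) : option rat :=
  omap (fun x => x - quarter_n) (exchat_e e).

End Basic.

Local Open Scope ring_scope.
Definition omin (a b : option rat) : option rat :=
  match a, b with
  | Some x, Some y => Some (Num.min x y)
  | Some x, None => Some x
  | None, y => y
  end.
Definition oadd (a : option rat) (c : rat) : option rat := omap (fun x => x + c) a.
Local Close Scope ring_scope.

(* The graph G_u: from G - e delete u and add a new edge f_u (= None) joining
   w1 and w2. *)
Section Gu.
Variables (G : mgraph) (e : edge G) (u : vert G) (w1 w2 : {x : vert G | x != u}).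

Definition keepE : pred (edge G) :=
  fun f => [&& f != e, (ends f).1 != u & (ends f).2 != u].

Lemma keep1 f : keepE f -> (ends f).1 != u.
Proof. by case/and3P. Qed.
Lemma keep2 f : keepE f -> (ends f).2 != u.
Proof. by case/and3P. Qed.

Definition Gu_ends (o : option {f : edge G | keepE f}) :
    {x : vert G | x != u} * {x : vert G | x != u} :=
  match o with
  | Some f => (exist _ (ends (val f)).1 (keep1 (valP f)),
               exist _ (ends (val f)).2 (keep2 (valP f)))
  | None => (w1, w2)
  end.

Definition Gu : mgraph :=
  @MGraph {x : vert G | x != u} (option {f : edge G | keepE f}) Gu_ends.

Definition f_u : edge Gu := None.
End Gu.

(* Main.v *)
Require Import Defs.
From mathcomp Require Import all_boot all_order all_algebra.
From mathcomp Require Import ring lra zify.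
Import Order.TTheory GRing.Theory Num.Theory.
Set Implicit Arguments. Unset Strict Implicit. Unset Printing Implicit Defensive.

Lemma sum_option (T : finType) (F : option T -> nat) :
  \sum_(o : option T) F o = F None + \sum_(t : T) F (Some t).
Proof.
rewrite (bigD1 None) //=; congr (_ + _).
rewrite (reindex_omap Some (fun o => o)) //=.
  by apply: eq_bigl => t; rewrite eqxx.
by case.
Qed.

Lemma min_opt_None s : min_opt s = None -> s = [::].
Proof. by case: s. Qed.

Lemma min_opt_Some s m : min_opt s = Some m -> m \in s /\ forall x, x \in s -> m <= x.
Proof.
elim: s m => //= x s IH m [<-].
case E: (min_opt s) => [y|].
  have [ys yl] := IH _ E.
  split.
    by case: (leqP x y) => h; rewrite ?(minn_idPl (ltnW h)) ?(minn_idPr (ltnW h)) ?inE ?eqxx ?ys ?orbT //; rewrite /minn; case: ifP => _; rewrite ?inE ?eqxx ?ys ?orbT.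
  move=> z; rewrite inE => /orP[/eqP->|zs]; first exact: geq_minl.
  exact: leq_trans (geq_minr _ _) (yl _ zs).
have -> := min_opt_None E.
by split; [rewrite inE| move=> z; rewrite inE => /eqP->].
Qed.

Lemma min_opt_eq s1 s2 : s1 =i s2 -> min_opt s1 = min_opt s2.
Proof.
move=> E.
case E1: (min_opt s1) => [m1|]; case E2: (min_opt s2) => [m2|].
- have [i1 l1] := min_opt_Some E1; have [i2 l2] := min_opt_Some E2.
  congr Some; apply/eqP; rewrite eqn_leq l1 ?E // l2 -?E //.
- have [i1 _] := min_opt_Some E1; by rewrite E (min_opt_None E2) in i1.
- have [i2 _] := min_opt_Some E2; by rewrite -E (min_opt_None E1) in i2.
- by [].
Qed.

Definition ominN (a b : option nat) : option nat :=
  match a, b with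
  | Some x, Some y => Some (minn x y)
  | Some x, None => Some x
  | None, y => y
  end.

Lemma min_opt_cat s t : min_opt (s ++ t) = ominN (min_opt s) (min_opt t).
Proof.
elim: s => [|x s IH] /=; first by case: (min_opt t).
rewrite IH; case: (min_opt s) => [a|]; case: (min_opt t) => [b|] //=.
by rewrite minnA.
Qed.

Lemma min_opt_map_succ s : min_opt (map succn s) = omap succn (min_opt s).
Proof.
elim: s => [|x s IH] //=; rewrite IH; case: (min_opt s) => [a|] //=.
by rewrite minnSS.
Qed.

Lemma adj_inP (K : mgraph) (D : {set edge K}) x y :
  reflect (exists2 f, f \in D & (ends f = (x,y) \/ ends f = (y,x))) (adj_in D x y).
Proof.
apply: (iffP existsP) => [[f /andP[fD /orP[/eqP E|/eqP E]]]|[f fD E]].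
- by exists f => //; left.
- by exists f => //; right.
- by exists f; rewrite fD /=; case: E => ->; rewrite eqxx ?orbT.
Qed.

Lemma adj_in_sym (K : mgraph) (D : {set edge K}) : symmetric (adj_in D).
Proof.
move=> x y; apply/adj_inP/adj_inP => -[f fD E]; exists f => //; case: E; tauto.
Qed.

Lemma adj_deg (K : mgraph) (D : {set edge K}) x y : adj_in D x y -> deg_in D x != 0.
Proof.
case/adj_inP => f fD E; rewrite /deg_in (bigD1 f) //= -lt0n.
apply: leq_trans (leq_addr _ _); rewrite /inc.
by case: E => -> /=; rewrite eqxx ?addn1 ?add1n.
Qed.

Section S.
Variables (G : mgraph) (e : edge G) (u v : vert G) (w1 w2 : {x : vert G | x != u}) (g1 g2 : edge G).
Hypotheses (He : ends e = (u,v) \/ ends e = (v,u)) (vu : v != u)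
  (Hg1 : ends g1 = (u, val w1) \/ ends g1 = (val w1, u))
  (Hg2 : ends g2 = (u, val w2) \/ ends g2 = (val w2, u))
  (w12 : w1 != w2) (w1v : val w1 != v) (w2v : val w2 != v)
  (Hoth : forall f, f != e -> f != g1 -> f != g2 -> inc u f = 0).

Local Notation H := (Gu e w1 w2).

Lemma w1u : val w1 != u. Proof. by case: w1. Qed.
Lemma w2u : val w2 != u. Proof. by case: w2. Qed.
Lemma vw12 : val w1 != val w2. Proof. by rewrite val_eqE. Qed.

Lemma inc_u_e : inc u e = 1.
Proof. by rewrite /inc; case: He => ->; rewrite /= eqxx (negbTE vu). Qed.
Lemma inc_u_g1 : inc u g1 = 1.
Proof. by rewrite /inc; case: Hg1 => ->; rewrite /= eqxx (negbTE w1u). Qed.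
Lemma inc_u_g2 : inc u g2 = 1.
Proof. by rewrite /inc; case: Hg2 => ->; rewrite /= eqxx (negbTE w2u). Qed.

Lemma inc_e x : x != u -> inc x e = (v == x).
Proof. by rewrite /inc eq_sym => /negbTE xu; case: He => ->; rewrite /= xu ?addn0. Qed.
Lemma inc_g1 x : x != u -> inc x g1 = (val w1 == x).
Proof. by rewrite /inc eq_sym => /negbTE xu; case: Hg1 => ->; rewrite /= xu ?addn0. Qed.
Lemma inc_g2 x : x != u -> inc x g2 = (val w2 == x).
Proof. by rewrite /inc eq_sym => /negbTE xu; case: Hg2 => ->; rewrite /= xu ?addn0. Qed.

Lemma eg1 : e != g1.
Proof.
apply/eqP=> E; have := congr1 (@ends G) E; case: He => ->; case: Hg1 => -> /eqP; rewrite xpair_eqE => /andP[/eqP E1 /eqP E2].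
all: move: w1v w1u; rewrite ?E1 ?E2 ?eqxx //.
- by move: (val w1) E1 => a Ea _ h; move: h; rewrite Ea eqxx.
- by move: (val w1) E2 => a Ea _ h; move: h; rewrite Ea eqxx.
Qed.
Lemma eg2 : e != g2.
Proof.
apply/eqP=> E; have := congr1 (@ends G) E; case: He => ->; case: Hg2 => -> /eqP; rewrite xpair_eqE => /andP[/eqP E1 /eqP E2].
all: move: w2v w2u; rewrite ?E1 ?E2 ?eqxx //.
all: try by move: (val w2) E1 => a Ea _ h; move: h; rewrite Ea eqxx.
all: try by move: (val w2) E2 => a Ea _ h; move: h; rewrite Ea eqxx.
Qed.
Lemma g12 : g1 != g2.
Proof.
apply/eqP=> E; have := congr1 (@ends G) E; case: Hg1 => ->; case: Hg2 => -> /eqP; rewrite xpair_eqE => /andP[/eqP E1 /eqP E2].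
all: move: vw12 w1u w2u; rewrite ?E1 ?E2 ?eqxx //.
Qed.

Lemma keepP f : keepE e u f = [&& f != e, f != g1 & f != g2].
Proof.
apply/idP/idP.
  case/and3P=> fe f1 f2; rewrite fe /=; apply/andP; split; apply/eqP=> E; subst f.
    by case: Hg1 f1 f2 => ->; rewrite /= eqxx.
  by case: Hg2 f1 f2 => ->; rewrite /= eqxx.
case/and3P=> fe f1 f2; have := Hoth fe f1 f2; rewrite /inc /keepE fe /=.
by move/eqP; rewrite addn_eq0 !eqb0 => /andP[-> ->].
Qed.

Lemma deg_dec (D : {set edge G}) y : deg_in D y =
  (e \in D) * inc y e + (g1 \in D) * inc y g1 + (g2 \in D) * inc y g2 +
  \sum_(f | keepE e u f) (f \in D) * inc y f.
Proof.
rewrite /deg_in big_mkcond (bigD1 e) // (bigD1 g1); last by rewrite eq_sym eg1.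
rewrite (bigD1 g2); last by rewrite eq_sym eg2 eq_sym g12.
rewrite /=.
rewrite !addnA; congr (_ + _ + _ + _); try by case: ifP => _; rewrite ?mul1n ?mul0n.
apply: eq_big => [f|f _]; first by rewrite keepP andbA.
by case: ifP => _; rewrite ?mul1n ?mul0n.
Qed.

Lemma deg_u (D : {set edge G}) : e \notin D -> deg_in D u = (g1 \in D) + (g2 \in D).
Proof.
move=> eD; rewrite deg_dec (negbTE eD) inc_u_g1 inc_u_g2 !muln1 big1 ?addn0 //.
move=> f; rewrite keepP => /and3P[a b c]; by rewrite Hoth ?muln0.
Qed.

Definition phi (D : {set edge G}) : {set edge H} :=
  [set o | if o is Some k then val k \in D else g1 \in D].

Lemma inc_Some (x : vert H) (k : {f : edge G | keepE e u f}) :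
  inc x (Some k : edge H) = inc (val x) (val k).
Proof. by rewrite /inc /= -!val_eqE. Qed.

Lemma inc_None (x : vert H) :
  inc x (None : edge H) = (val w1 == val x) + (val w2 == val x).
Proof. by rewrite /inc /= !val_eqE. Qed.

Lemma degH_dec (D : {set edge G}) (x : vert H) :
  deg_in (phi D) x = (g1 \in D) * ((val w1 == val x) + (val w2 == val x)) +
    \sum_(f | keepE e u f) (f \in D) * inc (val x) f.
Proof.
rewrite /deg_in big_mkcond sum_option inE inc_None.
congr (_ + _); first by case: ifP => _; rewrite ?mul1n ?mul0n.
symmetry; rewrite (reindex_omap (val : {f : edge G | keepE e u f} -> edge G) insub); last by move=> f kf; rewrite insubT.
apply: eq_big => [k|k _]; first by rewrite (valP k) valK eqxx.
by rewrite inE inc_Some; case: ifP => _; rewrite ?mul1n ?mul0n.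
Qed.

Lemma deg_phi (D : {set edge G}) (x : vert H) :
  e \notin D -> (g1 \in D) = (g2 \in D) ->
  deg_in (phi D) x = deg_in D (val x).
Proof.
move=> eD g12D; have xu : val x != u by case: (x).
rewrite degH_dec deg_dec (negbTE eD) mul0n add0n inc_g1 // inc_g2 // -g12D mulnDr.
by [].
Qed.

Lemma g12_even (D : {set edge G}) : e \notin D ->
  (deg_in D u == 0) || (deg_in D u == 2) -> (g1 \in D) = (g2 \in D).
Proof. by move=> eD; rewrite deg_u //; case: (g1 \in D); case: (g2 \in D). Qed.

Lemma even_phi (D : {set edge G}) : e \notin D -> (g1 \in D) = (g2 \in D) ->
  even_cover D = even_cover (phi D).
Proof.
move=> eD g12D; apply/forallP/forallP => Hx x.
  by rewrite deg_phi.
have [xu|xu] := eqVneq x u.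
  by rewrite xu deg_u // -g12D; case: (g1 \in D).
by have := Hx (exist _ x xu); rewrite deg_phi.
Qed.

Definition psi (D' : {set edge H}) : {set edge G} :=
  [set f | match insub f : option {f0 : edge G | keepE e u f0} with
           | Some k => (Some k : edge H) \in D'
           | None => ((None : edge H) \in D') && ((f == g1) || (f == g2)) end].

Lemma nke : keepE e u e = false. Proof. by rewrite keepP eqxx. Qed.
Lemma nkg1 : keepE e u g1 = false. Proof. by rewrite keepP eqxx andbF. Qed.
Lemma nkg2 : keepE e u g2 = false. Proof. by rewrite keepP eqxx !andbF. Qed.

Lemma psi_e D' : e \notin psi D'.
Proof. by rewrite inE insubF ?nke // (negbTE eg1) (negbTE eg2) andbF. Qed.
Lemma psi_g1 D' : (g1 \in psi D') = ((None : edge H) \in D').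
Proof. by rewrite inE insubF ?nkg1 // eqxx andbT. Qed.
Lemma psi_g2 D' : (g2 \in psi D') = ((None : edge H) \in D').
Proof. by rewrite inE insubF ?nkg2 // eqxx orbT andbT. Qed.
Lemma phi_psi D' : phi (psi D') = D'.
Proof. by apply/setP => -[k|]; rewrite inE ?psi_g1 // inE valK. Qed.

Lemma niso_phi (D : {set edge G}) : e \notin D -> (g1 \in D) = (g2 \in D) ->
  nisolated D = nisolated (phi D) + (g1 \notin D).
Proof.
move=> eD g12D; rewrite /nisolated (cardsD1 u) [in RHS]addnC; congr (_ + _).
  by rewrite inE deg_u // -g12D; case: (g1 \in D).
rewrite -(card_imset [set x : vert H | deg_in (phi D) x == 0] val_inj).
apply: eq_card => y; rewrite !inE.
have [->|yu] := eqVneq y u.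
  apply/esym/negbTE/imsetP => -[x _ E]; by move: (valP x); rewrite -E eqxx.
have -> : y = val (exist (fun x => x != u) y yu) by [].
by rewrite mem_imset ?inE ?deg_phi //; exact: val_inj.
Qed.

Lemma other_end (p : vert G * vert G) y z : y != u -> z != u ->
  (p = (u,y) \/ p = (y,u)) -> (p = (u,z) \/ p = (z,u)) -> y = z.
Proof.
move=> yu zu [->|->] [] /eqP; rewrite xpair_eqE => /andP[/eqP a /eqP b] //.
- by move: zu; rewrite -a eqxx.
- by move: yu; rewrite a eqxx.
Qed.

Lemma insub_u : (insub u : option (vert H)) = None.
Proof. by rewrite insubF ?eqxx. Qed.

Section Ncyc.
Variable D : {set edge G}.
Hypotheses (eD : e \notin D) (g12D : (g1 \in D) = (g2 \in D)).

Lemma fD_g f y : f \in D -> y != u -> (ends f = (u,y) \/ ends f = (y,u)) ->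
  (f = g1 /\ y = val w1) \/ (f = g2 /\ y = val w2).
Proof.
move=> fD yu E.
have fe : f != e by apply/eqP=> fe; move: eD; rewrite -fe fD.
have incf : inc u f != 0 by rewrite /inc; case: E => -> /=; rewrite eqxx ?addn1.
have [fg1|fg1] := eqVneq f g1.
  left; split=> //; apply: other_end yu w1u E _; by rewrite fg1.
have [fg2|fg2] := eqVneq f g2.
  right; split=> //; apply: other_end yu w2u E _; by rewrite fg2.
by rewrite Hoth in incf.
Qed.

Lemma adjD_gD x : adj_in D u x -> g1 \in D.
Proof.
case/adj_inP => f fD E.
have xu : x != u.
  apply/eqP=> xu; subst x.
  have fe : f != e by apply/eqP=> fe; move: eD; rewrite -fe fD.
  have incf : inc u f = 2 by rewrite /inc; case: E => -> /=; rewrite eqxx.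
  have [fg1|fg1] := eqVneq f g1; first by move: incf; rewrite fg1 inc_u_g1.
  have [fg2|fg2] := eqVneq f g2; first by move: incf; rewrite fg2 inc_u_g2.
  by rewrite Hoth in incf.
by case: (fD_g fD xu E) => -[fg _]; [rewrite -fg | rewrite g12D -fg].
Qed.

Lemma hU (x : vert H) : adj_in D u (val x) -> connect (adj_in (phi D)) w1 x.
Proof.
case/adj_inP => f fD E.
have xu : val x != u by case: (x).
case: (fD_g fD xu E) => -[fg xw].
  by have -> : x = w1 by apply: val_inj.
have -> : x = w2 by apply: val_inj.
apply: connect1; apply/adj_inP; exists None; first by rewrite inE g12D -fg.
by left.
Qed.

Lemma wconn : g1 \in D -> connect (adj_in D) (val w1) (val w2).
Proof.
move=> g1D; apply: (connect_trans (y := u)); apply: connect1; apply/adj_inP.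
  by exists g1 => //; case: Hg1; tauto.
by exists g2; rewrite -?g12D //; case: Hg2; tauto.
Qed.

Lemma ncyc_phi : ncycles D = ncycles (phi D).
Proof.
have symD := sym_connect_sym (adj_in_sym D).
have symH := sym_connect_sym (adj_in_sym (phi D)).
pose a := [pred x | deg_in D x != 0].
have clD : closed (adj_in D) a.
  apply: (intro_closed symD) => x y xy _; rewrite inE /=.
  by apply: (adj_deg (y := x)); rewrite adj_in_sym.
rewrite /ncycles (adjunction_n_comp (val : vert H -> vert G) symD symH clD).
  by apply: eq_n_comp_r => x; rewrite !inE /= deg_phi.
apply: (intro_adjunction symH clD (fun x _ => odflt w1 (insub x))).
  move=> x ax; split.
    case: insubP => [x' _ <-|] /=; first exact: connect0.
    rewrite negbK => /eqP xu; rewrite xu in ax *; apply: connect1; apply/adj_inP; exists g1; last by case: Hg1; tauto.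
    move: ax; rewrite inE /= deg_u // -g12D; by case: (g1 \in D).
  move=> y ay xy.
  have [xu|xu] := eqVneq x u; have [yu|yu] := eqVneq y u.
  - by rewrite xu yu connect0.
  - subst x; rewrite insub_u (insubT (fun x => x != u) yu) /=.
    by apply: hU.
  - subst y; rewrite insub_u (insubT (fun x => x != u) xu) /=.
    by rewrite symH; apply: hU; rewrite adj_in_sym.
  - rewrite (insubT (fun x => x != u) yu) (insubT (fun x => x != u) xu) /=.
    apply: connect1; case/adj_inP: xy => f fD E.
    have kf : keepE e u f.
      rewrite /keepE; have -> : f != e by apply/eqP=> fe; move: eD; rewrite -fe fD.
      by case: E => -> /=; rewrite xu yu.
    apply/adj_inP; exists (Some (exist _ f kf)); first by rewrite inE.
    by case: E => E; [left|right]; apply/eqP; rewrite xpair_eqE -!val_eqE /= E !eqxx.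
move=> x' ax; split; first by rewrite valK /= connect0.
move=> y'; case/adj_inP => -[k|] oD E.
  apply: connect1; apply/adj_inP; exists (val k); first by rewrite inE in oD.
  move: E => [] /(congr1 (fun p : vert H * vert H => (val p.1, val p.2))) /= E.
    by left; rewrite -E -surjective_pairing.
  by right; rewrite -E -surjective_pairing.
rewrite inE in oD.
case: E => /eqP; rewrite xpair_eqE => /andP[/eqP <- /eqP <-]; first exact: wconn.
by rewrite symD; exact: wconn.
Qed.
End Ncyc.

Lemma exc_phi (D : {set edge G}) : even_cover D -> e \notin D ->
  exc D = exc (phi D) + (g1 \notin D).
Proof.
move=> evD eD; have g12D := g12_even eD (forallP evD u).
by rewrite /exc ncyc_phi // niso_phi // addnA.
Qed.

Lemma min_main :
  min_exc (fun F : {set edge G} => e \notin F) =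
  ominN (min_exc (fun F : {set edge H} => f_u e w1 w2 \in F))
        (omap succn (min_exc (fun F : {set edge H} => f_u e w1 w2 \notin F))).
Proof.
rewrite /min_exc -min_opt_map_succ -min_opt_cat; apply: min_opt_eq => n.
rewrite mem_cat; apply/mapP/orP.
  case=> F; rewrite mem_enum /= => /andP[evF eF] ->.
  have g12F := g12_even eF (forallP evF u).
  have evP : even_cover (phi F) by rewrite -even_phi.
  case g1F: (g1 \in F).
    left; apply/mapP; exists (phi F); first by rewrite mem_enum !inE evP g1F.
    by rewrite exc_phi // g1F addn0.
  right; apply/mapP; exists (exc (phi F)); last by rewrite exc_phi // g1F addn1.
  by apply/mapP; exists (phi F) => //; rewrite mem_enum !inE evP g1F.
have evpsi F' : even_cover F' -> even_cover (psi F').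
  by move=> ev; rewrite even_phi ?psi_e ?psi_g1 ?psi_g2 // phi_psi.
case=> /mapP.
  case=> F'; rewrite mem_enum /= => /andP[ev nF] ->.
  exists (psi F'); first by rewrite mem_enum; apply/andP; split; [exact: evpsi | exact: psi_e].
  by rewrite exc_phi ?psi_e ?evpsi // phi_psi psi_g1 nF addn0.
case=> m /mapP[F']; rewrite mem_enum /= => /andP[ev nF] -> ->.
exists (psi F'); first by rewrite mem_enum; apply/andP; split; [exact: evpsi | exact: psi_e].
by rewrite exc_phi ?psi_e ?evpsi // phi_psi psi_g1 (negbTE nF) addn1.
Qed.

Lemma deg_u3 : deg u = 3.
Proof.
rewrite /deg deg_dec !inE inc_u_e inc_u_g1 inc_u_g2 big1 //.
by move=> f; rewrite keepP => /and3P[a b c]; rewrite Hoth ?muln0.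
Qed.

Lemma deg_e (y : vert G) : deg y = inc y e + deg_in (setT :\ e) y.
Proof.
rewrite /deg /deg_in (bigD1 e) ?inE //; congr (_ + _).
by apply: eq_bigl => f; rewrite !inE andbT.
Qed.

Lemma deg_H (x : vert H) : deg x = deg (val x) - (v == val x).
Proof.
have xu : val x != u by case: (x).
have -> : deg x = deg_in (phi (setT :\ e)) x.
  rewrite /deg; congr deg_in; apply/setP => -[k|]; rewrite !inE //.
    by have := valP k; case/and3P => ->.
  by rewrite eq_sym eg1.
rewrite deg_phi ?setD11 // ?inE; last by rewrite eq_sym eg1 eq_sym eg2.
by rewrite deg_e inc_e // addKn.
Qed.

Lemma quarter_eq : deg v = 3 -> (nG H + n2G H = nG G + n2G G)%N.
Proof.
move=> dv.
have n2 : n2G H = (n2G G).+1.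
  rewrite /n2G -(card_imset [set x : vert H | deg x == 2] val_inj).
  have -> : [set val x | x in [set x : vert H | deg x == 2]] =
            v |: [set y | deg y == 2].
    apply/setP => y; rewrite !inE.
    have [->|yu] := eqVneq y u.
      rewrite deg_u3 eq_sym (negbTE vu) /=.
      apply/negbTE/imsetP => -[[x' xu'] _ /= E]; by rewrite -E eqxx in xu'.
    have -> : y = val (exist (fun x => x != u) y yu) by [].
    rewrite mem_imset ?inE ?deg_H /=; last exact: val_inj.
    have [->|yv] := eqVneq y v; first by rewrite dv.
    by rewrite /= subn0.
  by rewrite cardsU1 inE dv.
have n1 : nG H = (nG G).-1.
  by rewrite /nG card_sig (eq_card (fun x => erefl (x != u))) cardC1.
have n0 : 0 < nG G by apply/card_gt0P; exists u.
by rewrite n1 n2 addnS -addSn prednK.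
Qed.
End S.

Section Arith.
Local Open Scope ring_scope.
Lemma final_arith (q : rat) (A B : option nat) :
  omap (fun x => x - q) (omap (fun m : nat => (m%:R : rat)) (ominN A (omap succn B))) =
  omin (oadd (omap (fun x => x - q) (omap (fun m : nat => (m%:R : rat) - 2%:R) A)) 2%:R)
       (oadd (omap (fun x => x - q) (omap (fun m : nat => (m%:R : rat)) B)) 1%:R).
Proof.
case: A => [a|]; case: B => [b|] /=; try congr Some.
- have -> : (a%:R - 2%:R - q + 2%:R : rat) = a%:R - q by ring.
  have -> : (b%:R - q + 1%:R : rat) = (b.+1)%:R - q by rewrite -addn1 natrD; ring.
  case: (leqP a b.+1) => h.
    apply/esym/min_idPl; by rewrite lerD2r ler_nat.
  apply/esym/min_idPr; by rewrite lerD2r ler_nat ltnW.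
- by ring.
- by rewrite -addn1 natrD; ring.
- by [].
Qed.
End Arith.

Lemma first_step (T : finType) (r : rel T) x y : connect r x y -> x != y -> exists z, r x z.
Proof.
case/connectP => -[|z p] /=; first by move=> _ ->; rewrite eqxx.
by case/andP => rz _ _ _; exists z.
Qed.

Lemma degv2 (G : mgraph) (D : {set edge G}) (v : vert G) :
  simple_in D -> two_connected_in D -> 2 <= deg_in D v.
Proof.
move=> [noloop _] [c2 conn conn2].
have [y yv] : exists y, y != v.
  case: (pickP (predC1 v)) => [y yv|none]; first by exists y.
  by move: c2; have := cardC1 v; rewrite (eq_card0 none); lia.
have vy : v != y by rewrite eq_sym.
have [z0 /and3P[_ _ /adj_inP [f0 f0D E0]]] := first_step (conn v y (in_setT _) (in_setT _)) vy.
have vz0 : v != z0.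
  by have := noloop f0 f0D; case: E0 => -> //=; rewrite eq_sym.
have : ~~ ([set: vert G] \subset [set v; z0]).
  apply/negP => /subset_leq_card; rewrite cardsT.
  by have := cards2 v z0; move: c2; lia.
case/subsetPn => w _; rewrite !inE negb_or => /andP[wv wz0].
have Sv : v \in [set: vert G] :\ z0 by rewrite !inE vz0.
have Sw : w \in [set: vert G] :\ z0 by rewrite !inE wz0.
have vw : v != w by rewrite eq_sym.
have [b /and3P[_ Sb /adj_inP [f1 f1D E1]]] := first_step (conn2 z0 v w Sv Sw) vw.
have bz0 : b != z0 by move: Sb; rewrite !inE => /andP[].
have f01 : f0 != f1.
  apply/eqP => ef; move: E1; rewrite -ef.
  case: E0 => ->; case=> /eqP; rewrite xpair_eqE => /andP[/eqP h1 /eqP h2].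
  all: try first [ by move: bz0; rewrite ?h1 ?h2 eqxx | by move: vz0; rewrite ?h1 ?h2 eqxx
    | by move: bz0; rewrite -?h1 -?h2 eqxx | by move: vz0; rewrite -?h1 -?h2 eqxx
    | by move: vz0; rewrite h1 -h2 eqxx | by move: vz0; rewrite -h1 h2 eqxx
    | by move: bz0; rewrite h1 -h2 eqxx | by move: bz0; rewrite -h1 h2 eqxx
    | by move: vz0; rewrite -h1 -h2 eqxx | by move: bz0; rewrite -h1 -h2 eqxx ].
rewrite /deg_in (bigD1 f0) // (bigD1 f1) /=; last by rewrite f1D eq_sym.
have i0 : 0 < inc v f0 by rewrite /inc; case: E0 => -> /=; rewrite eqxx ?addn1.
have i1 : 0 < inc v f1 by rewrite /inc; case: E1 => -> /=; rewrite eqxx ?addn1.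
lia.
Qed.

Theorem mainTheorem10 (G : mgraph) (e : edge G) (u v : vert G)
    (w1 w2 : {x : vert G | x != u}) :
  two_connected G -> subcubic G ->
  (ends e = (u, v) \/ ends e = (v, u)) ->
  simple_in (setT :\ e) -> two_connected_in (setT :\ e) ->
  w1 != w2 ->
  [set y | (y != v) && adj u y] = [set val w1; val w2] ->
  deltahat e =
    omin (oadd (delta (f_u e w1 w2)) 2%:R)
         (oadd (deltahat (f_u e w1 w2)) 1%:R).
Proof.
move=> _ sub He simp tc w12 Hset.
have w1in : val w1 \in [set y | (y != v) && adj u y] by rewrite Hset !inE eqxx.
have w2in : val w2 \in [set y | (y != v) && adj u y] by rewrite Hset !inE eqxx orbT.
rewrite inE in w1in; rewrite inE in w2in.
case/andP: w1in => w1v /adj_inP [g1 _ Hg1].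
case/andP: w2in => w2v /adj_inP [g2 _ Hg2].
have e1 := eg1 He Hg1 w1v; have e2 := eg2 He Hg2 w2v; have e12 := g12 Hg1 Hg2 w12.
have i1 := inc_u_g1 Hg1; have i2 := inc_u_g1 Hg2.
have ie : 0 < inc u e by rewrite /inc; case: He => -> /=; rewrite eqxx ?addn1.
have Hd := sub u.
rewrite /deg /deg_in (bigD1 e) // (bigD1 g1) ?in_setT 1?eq_sym ?e1 // in Hd.
rewrite (bigD1 g2) /= in Hd; last by rewrite in_setT eq_sym e2 eq_sym e12.
have Hoth : forall f, f != e -> f != g1 -> f != g2 -> inc u f = 0.
  move=> f fe f1 f2; move: Hd; rewrite (bigD1 f) /=; last by rewrite in_setT fe f1 f2.
  by rewrite i1 i2; lia.
have vu : v != u.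
  apply/eqP => vu; move: Hd ie; rewrite i1 i2 /inc; case: He => ->; rewrite vu eqxx /=; lia.
have dv : deg v = 3.
  have := degv2 v simp tc; have := sub v; rewrite (deg_e e) /inc.
  by case: He => -> /=; rewrite eqxx ?(negbTE vu) 1?eq_sym ?(negbTE vu) /=; lia.
rewrite /deltahat /delta /exc_e /exchat_e (min_main He Hg1 Hg2 w12 w1v w2v Hoth).
have -> : quarter_n (Gu e w1 w2) = quarter_n G.
  by rewrite /quarter_n (quarter_eq He vu Hg1 Hg2 w12 w1v w2v Hoth dv).
exact: final_arith.
Qed.
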